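(* Let $\mathcal C$ be a category with finite products, regarded as a cartesian monoidal category. Then the category of simplicial objects in $\mathcal C$ is equivalent to the category of oplax monoidal functors $\Delta_{*,*}^{op}\to\mathcal C$ (with monoidal natural transformations). The equivalence sends a simplicial object $X$ to its restriction to endpoint-preserving maps, equipped with the oplax structure maps $(d_{p+1}^{\,q},d_0^{\,p})\colon X_{p+q}\to X_p\times X_q$ (front $p$-face and back $q$-face).
   Context: $\Delta_{*,*}$ is the subcategory of the simplicial category $\Delta$ with objects $[n]=\{0<\dots<n\}$, $n\ge0$, and morphisms the order-preserving maps $f\colon[m]\to[n]$ with $f(0)=0$ and $f(m)=n$. It is strict monoidal with $[p]\otimes[q]=[p+q]$, obtained by identifying $p\in[p]$ with $0\in[q]$ (and $f\otimes g$ acting by $f$ on the first block and by shifted $g$ on the second), unit $[0]$. An oplax monoidal functor $F\colon\Delta_{*,*}^{op}\to\mathcal C$ is a functor with natural maps $F([p]\otimes[q])\to F[p]\times F[q]$ and $F[0]\to\ast$ satisfying the usual coassociativity and counitality coherence. For a simplicial object $X$, $d_i\colon X_n\to X_{n-1}$ are the face maps; $d_{p+1}^{\,q}$ means $d_{p+1}$ applied $q$ times and $d_0^{\,p}$ means $d_0$ applied $p$ times. *)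

(* Defs.v *)
From Stdlib Require Import FunctionalExtensionality ProofIrrelevance.
From HB Require Import structures.
From mathcomp Require Import all_boot zify.

Set Implicit Arguments.
Unset Strict Implicit.
Unset Printing Implicit Defensive.

(** * Categories (hom-types with Leibniz equality of morphisms)        *)

Record Cat := Cat_ {
  ob :> Type;
  hom : ob -> ob -> Type;
  comp : forall a b c, hom b c -> hom a b -> hom a c;   (* comp g f = g o f *)
  idm : forall a, hom a a;
  comp1f : forall a b (f : hom a b), comp (idm b) f = f;
  compf1 : forall a b (f : hom a b), comp f (idm a) = f;
  compA : forall a b c d (h : hom c d) (g : hom b c) (f : hom a b),
      comp h (comp g f) = comp (comp h g) f }.
Arguments hom {_} _ _.
Arguments comp {_ _ _ _} _ _.
Arguments idm {_} _.

Record Functor (C D : Cat) := Functor_ {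
  F0 :> C -> D;
  F1 : forall a b : C, hom a b -> hom (F0 a) (F0 b);
  F1_id : forall a, F1 (idm a) = idm (F0 a);
  F1_comp : forall a b c (g : hom b c) (f : hom a b),
      F1 (comp g f) = comp (F1 g) (F1 f) }.
Arguments F1 {C D} _ {a b} _.

Definition is_equivalence (C D : Cat) (F : Functor C D) : Prop :=
  exists (G : Functor D C)
         (eta : forall a : C, hom a (G (F a)))
         (eta' : forall a : C, hom (G (F a)) a)
         (eps : forall b : D, hom (F (G b)) b)
         (eps' : forall b : D, hom b (F (G b))),
    [/\ forall a a' (f : hom a a'), comp (eta a') f = comp (F1 G (F1 F f)) (eta a),
        forall b b' (g : hom b b'), comp (eps b') (F1 F (F1 G g)) = comp g (eps b),
        forall a, comp (eta' a) (eta a) = idm a /\ comp (eta a) (eta' a) = idm _ &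
        forall b, comp (eps' b) (eps b) = idm _ /\ comp (eps b) (eps' b) = idm b].

Record FinProducts (C : Cat) := FinProducts_ {
  term : C;
  bang : forall a : C, hom a term;
  bang_uniq : forall a (f : hom a term), f = bang a;
  prodo : C -> C -> C;
  ppr1 : forall a b, hom (prodo a b) a;
  ppr2 : forall a b, hom (prodo a b) b;
  pairm : forall c a b, hom c a -> hom c b -> hom c (prodo a b);
  ppr1_pair : forall c a b (f : hom c a) (g : hom c b), comp (ppr1 a b) (pairm f g) = f;
  ppr2_pair : forall c a b (f : hom c a) (g : hom c b), comp (ppr2 a b) (pairm f g) = g;
  pair_uniq : forall c a b (h : hom c (prodo a b)),
      h = pairm (comp (ppr1 a b) h) (comp (ppr2 a b) h) }.
Arguments term {C} _.
Arguments bang {C} _ _.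
Arguments prodo {C} _ _ _.
Arguments ppr1 {C} _ {a b}.
Arguments ppr2 {C} _ {a b}.
Arguments pairm {C} _ {c a b} _ _.

Section ProdOps.
Variables (C : Cat) (P : FinProducts C).
Definition fprodm (a b a' b' : C) (f : hom a a') (g : hom b b') :
  hom (prodo P a b) (prodo P a' b') :=
  pairm P (comp f (ppr1 P)) (comp g (ppr2 P)).
Definition passoc (a b c : C) : hom (prodo P a (prodo P b c)) (prodo P (prodo P a b) c) :=
  pairm P (pairm P (ppr1 P) (comp (ppr1 P) (ppr2 P))) (comp (ppr2 P) (ppr2 P)).
End ProdOps.
Arguments fprodm {C} P {a b a' b'} _ _.
Arguments passoc {C} P a b c.

(** * The simplex category Delta and its subcategory Delta_{*,*}       *)

(** Order-preserving maps [m] -> [n], [k] = 'I_k.+1 = {0 < ... < k}. *)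
Definition dmono m n (f : {ffun 'I_m.+1 -> 'I_n.+1}) : bool :=
  [forall i : 'I_m.+1, forall j : 'I_m.+1, (i <= j)%N ==> (f i <= f j)%N].
Definition dmap m n := {f : {ffun 'I_m.+1 -> 'I_n.+1} | dmono f}.
Definition dfn m n (f : dmap m n) : 'I_m.+1 -> 'I_n.+1 := fun i => (sval f) i.

Lemma dfn_mono m n (f : dmap m n) (i j : 'I_m.+1) :
  (i <= j)%N -> (dfn f i <= dfn f j)%N.
Proof.
case: f => f Hf ij; rewrite /dfn /=.
by move/forallP: Hf => /(_ i) /forallP /(_ j) /implyP; apply.
Qed.

Lemma dmap_eq m n (a b : dmap m n) : (forall i, (dfn a i : nat) = dfn b i) -> a = b.
Proof. by move=> H; apply: val_inj; apply/ffunP => i; apply: val_inj; exact: H. Qed.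

Lemma did_mono n : dmono [ffun i : 'I_n.+1 => i].
Proof. by apply/forallP => i; apply/forallP => j; apply/implyP; rewrite !ffunE. Qed.
Definition did n : dmap n n := exist (@dmono n n) _ (did_mono n).

Lemma dcomp_mono l m n (f : dmap l m) (g : dmap m n) :
  dmono [ffun i => dfn g (dfn f i)].
Proof.
apply/forallP => i; apply/forallP => j; apply/implyP => ij; rewrite !ffunE.
by apply: dfn_mono; apply: dfn_mono.
Qed.
(** dcomp f g = g o f *)
Definition dcomp l m n (f : dmap l m) (g : dmap m n) : dmap l n :=
  exist (@dmono l n) _ (dcomp_mono f g).

(** Endpoint-preserving maps: the morphisms of Delta_{*,*}. *)
Definition endpt m n (f : dmap m n) : bool :=
  (dfn f ord0 == ord0) && (dfn f ord_max == ord_max).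
Definition emap m n := {f : dmap m n | endpt f}.
Definition efn m n (f : emap m n) : 'I_m.+1 -> 'I_n.+1 := dfn (sval f).

Lemma eid_endpt n : endpt (did n).
Proof. by rewrite /endpt /dfn /= !ffunE !eqxx. Qed.
Definition eid n : emap n n := exist (@endpt n n) _ (eid_endpt n).

Lemma ecomp_endpt l m n (f : emap l m) (g : emap m n) :
  endpt (dcomp (sval f) (sval g)).
Proof.
case: f g => f Hf [g Hg] /=.
move/andP: Hf => [/eqP f0 /eqP f1]; move/andP: Hg => [/eqP g0 /eqP g1].
rewrite /endpt {1 2}/dfn /= !ffunE f0 f1 g0 g1 !eqxx. by [].
Qed.
Definition ecomp l m n (f : emap l m) (g : emap m n) : emap l n :=
  exist (@endpt l n) _ (ecomp_endpt f g).

(** * Simplicial objects in C (contravariant functors Delta^op -> C)   *)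

Section Simplicial.
Variable C : Cat.

Record sobj := SObj {
  sX : nat -> C;
  sact : forall m n, dmap m n -> hom (sX n) (sX m);
  sact_id : forall n, sact (did n) = idm (sX n);
  sact_comp : forall l m n (f : dmap l m) (g : dmap m n),
      sact (dcomp f g) = comp (sact f) (sact g) }.

Record smor (X Y : sobj) := SMor {
  scomp : forall n, hom (sX X n) (sX Y n);
  snat : forall m n (f : dmap m n),
      comp (scomp m) (sact X f) = comp (sact Y f) (scomp n) }.

Lemma smor_eq X Y (a b : smor X Y) : (forall n, scomp a n = scomp b n) -> a = b.
Proof.
case: a b => a Ha [b Hb] /= H.
have E : a = b by apply: functional_extensionality_dep.
subst b; f_equal; apply: proof_irrelevance.
Qed.

Lemma sid_nat X m n (f : dmap m n) :
  comp (idm (sX X m)) (sact X f) = comp (sact X f) (idm (sX X n)).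
Proof. by rewrite comp1f compf1. Qed.
Definition sid X : smor X X := SMor (@sid_nat X).

Lemma scomp_nat X Y Z (b : smor Y Z) (a : smor X Y) m n (f : dmap m n) :
  comp (comp (scomp b m) (scomp a m)) (sact X f)
  = comp (sact Z f) (comp (scomp b n) (scomp a n)).
Proof. by rewrite -compA snat compA snat compA. Qed.
Definition scompose X Y Z (b : smor Y Z) (a : smor X Y) : smor X Z :=
  SMor (scomp_nat b a).

Definition SCat : Cat.
Proof.
refine (@Cat_ sobj smor scompose sid _ _ _).
- by move=> a b f; apply: smor_eq => n /=; rewrite comp1f.
- by move=> a b f; apply: smor_eq => n /=; rewrite compf1.
- by move=> a b c d h g f; apply: smor_eq => n /=; rewrite compA.
Defined.
End Simplicial.

(** * Oplax monoidal functors Delta_{*,*}^op -> (C, x, 1)              *)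

Section Oplax.
Variables (C : Cat) (P : FinProducts C).

(** [p] (x) [q] = [p+q]; for f : [p]->[p'], g : [q]->[q'] the map f (x) g
    acts by f on {0..p} and by (shifted) g on {p..p+q}.  We state the
    naturality of the oplax structure for any map h with this graph. *)
Definition is_tensor p p' q q' (f : emap p p') (g : emap q q')
  (h : emap (p + q) (p' + q')) : Prop :=
  forall i : 'I_(p + q).+1,
    (efn h i : nat) = if (i <= p)%N then (efn f (inord i) : nat)
                      else (p' + efn g (inord (i - p)))%N.

(** the identity map between two presentations of the same ordinal
    (used to express the strict associativity / unitality of (x)). *)
Definition is_cast m n (h : emap m n) : Prop :=
  forall i : 'I_m.+1, (efn h i : nat) = i.

Record oplax := Oplax {
  oF : nat -> C;
  oact : forall m n, emap m n -> hom (oF n) (oF m);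
  oact_id : forall n, oact (eid n) = idm (oF n);
  oact_comp : forall l m n (f : emap l m) (g : emap m n),
      oact (ecomp f g) = comp (oact f) (oact g);
  omu : forall p q, hom (oF (p + q)) (prodo P (oF p) (oF q));
  oeps : hom (oF 0) (term P);
  omu_nat : forall p p' q q' (f : emap p p') (g : emap q q') (h : emap (p + q) (p' + q')),
      is_tensor f g h ->
      comp (omu p q) (oact h) = comp (fprodm P (oact f) (oact g)) (omu p' q');
  omu_coassoc : forall p q r (h : emap (p + q + r) (p + (q + r))),
      is_cast h ->
      comp (comp (fprodm P (omu p q) (idm (oF r))) (omu (p + q) r)) (oact h)
      = comp (passoc P (oF p) (oF q) (oF r))
             (comp (fprodm P (idm (oF p)) (omu q r)) (omu p (q + r)));
  omu_counit_l : forall p (h : emap (0 + p) p),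
      is_cast h ->
      comp (ppr2 P) (comp (fprodm P oeps (idm (oF p))) (comp (omu 0 p) (oact h)))
      = idm (oF p);
  omu_counit_r : forall p (h : emap (p + 0) p),
      is_cast h ->
      comp (ppr1 P) (comp (fprodm P (idm (oF p)) oeps) (comp (omu p 0) (oact h)))
      = idm (oF p) }.

Record omor (F G : oplax) := OMor {
  ocomp : forall n, hom (oF F n) (oF G n);
  onat : forall m n (f : emap m n),
      comp (ocomp m) (oact F f) = comp (oact G f) (ocomp n);
  omon : forall p q,
      comp (omu G p q) (ocomp (p + q)) = comp (fprodm P (ocomp p) (ocomp q)) (omu F p q);
  oepsm : comp (oeps G) (ocomp 0) = oeps F }.

Lemma omor_eq F G (a b : omor F G) : (forall n, ocomp a n = ocomp b n) -> a = b.
Proof.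
case: a b => a Ha Hb Hc [b Ha' Hb' Hc'] /= H.
have E : a = b by apply: functional_extensionality_dep.
subst b; f_equal; apply: proof_irrelevance.
Qed.

Lemma pair_comp c' c a b (f : hom c a) (g : hom c b) (k : hom c' c) :
  comp (pairm P f g) k = pairm P (comp f k) (comp g k).
Proof.
by rewrite [LHS]pair_uniq !compA ppr1_pair ppr2_pair.
Qed.

Lemma fprod_pair c a b a' b' (f : hom a a') (g : hom b b') (u : hom c a) (v : hom c b) :
  comp (fprodm P f g) (pairm P u v) = pairm P (comp f u) (comp g v).
Proof. by rewrite /fprodm pair_comp -!compA ppr1_pair ppr2_pair. Qed.

Lemma fprod_comp a b a' b' a'' b'' (f : hom a a') (g : hom b b')
  (f' : hom a' a'') (g' : hom b' b'') :
  comp (fprodm P f' g') (fprodm P f g) = fprodm P (comp f' f) (comp g' g).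
Proof. by rewrite {2}/fprodm fprod_pair !compA. Qed.

Lemma fprod_id a b : fprodm P (idm a) (idm b) = idm (prodo P a b).
Proof. by rewrite /fprodm !comp1f [RHS]pair_uniq !compf1. Qed.

Lemma oid_omon F p q :
  comp (omu F p q) (idm _) = comp (fprodm P (idm (oF F p)) (idm (oF F q))) (omu F p q).
Proof. by rewrite fprod_id comp1f compf1. Qed.
Lemma oid_nat F m n (f : emap m n) :
  comp (idm (oF F m)) (oact F f) = comp (oact F f) (idm (oF F n)).
Proof. by rewrite comp1f compf1. Qed.
Lemma oid_eps F : comp (oeps F) (idm _) = oeps F.
Proof. by rewrite compf1. Qed.
Definition oid F : omor F F := OMor (@oid_nat F) (@oid_omon F) (oid_eps F).

Section OCompose.
Variables (F G H : oplax) (b : omor G H) (a : omor F G).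
Lemma ocomp_nat m n (f : emap m n) :
  comp (comp (ocomp b m) (ocomp a m)) (oact F f)
  = comp (oact H f) (comp (ocomp b n) (ocomp a n)).
Proof. by rewrite -compA onat compA onat compA. Qed.
Lemma ocomp_mon p q :
  comp (omu H p q) (comp (ocomp b (p + q)) (ocomp a (p + q)))
  = comp (fprodm P (comp (ocomp b p) (ocomp a p)) (comp (ocomp b q) (ocomp a q)))
         (omu F p q).
Proof. by rewrite compA omon -compA omon compA fprod_comp. Qed.
Lemma ocomp_eps : comp (oeps H) (comp (ocomp b 0) (ocomp a 0)) = oeps F.
Proof. by rewrite compA !oepsm. Qed.
Definition ocompose : omor F H := OMor ocomp_nat ocomp_mon ocomp_eps.
End OCompose.

Definition OCat : Cat.
Proof.
refine (@Cat_ oplax omor (fun F G H b a => ocompose b a) oid _ _ _).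
- by move=> a b f; apply: omor_eq => n /=; rewrite comp1f.
- by move=> a b f; apply: omor_eq => n /=; rewrite compf1.
- by move=> a b c d h g f; apply: omor_eq => n /=; rewrite compA.
Defined.
End Oplax.

(** * The restriction functor  sC -> Oplax(Delta_{*,*}^op, C)           *)

(** front inclusion [p] -> [p+q], i |-> i  (so X(front) = d_{p+1}^q)   *)
Lemma front_mono p q : dmono [ffun i : 'I_p.+1 => (inord i : 'I_(p + q).+1)].
Proof.
apply/forallP => i; apply/forallP => j; apply/implyP => ij; rewrite !ffunE.
have hi := ltn_ord i; have hj := ltn_ord j.
by rewrite !inordK //; lia.
Qed.
Definition front p q : dmap p (p + q) := exist (@dmono p (p + q)) _ (front_mono p q).

(** back inclusion [q] -> [p+q], i |-> p + i  (so X(back) = d_0^p)     *)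
Lemma back_mono p q : dmono [ffun i : 'I_q.+1 => (inord (p + i) : 'I_(p + q).+1)].
Proof.
apply/forallP => i; apply/forallP => j; apply/implyP => ij; rewrite !ffunE.
have hi := ltn_ord i; have hj := ltn_ord j.
by rewrite !inordK //; lia.
Qed.
Definition back p q : dmap q (p + q) := exist (@dmono q (p + q)) _ (back_mono p q).

Lemma dfn_front p q i : (dfn (front p q) i : nat) = i.
Proof. by rewrite /dfn /= ffunE inordK //; have := ltn_ord i; lia. Qed.
Lemma dfn_back p q i : (dfn (back p q) i : nat) = (p + i)%N.
Proof. by rewrite /dfn /= ffunE inordK //; have := ltn_ord i; lia. Qed.
Lemma dfn_dcomp l m n (f : dmap l m) (g : dmap m n) i :
  dfn (dcomp f g) i = dfn g (dfn f i).
Proof. by rewrite /dfn /= ffunE. Qed.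

Section Restriction.
Variables (C : Cat) (P : FinProducts C) (X : sobj C).

Lemma sact_pw l m n (a : dmap l m) (b : dmap m n) (c : dmap l n) :
  (forall i, (dfn b (dfn a i) : nat) = dfn c i) ->
  comp (sact X a) (sact X b) = sact X c.
Proof.
by move=> H; rewrite -sact_comp; congr sact; apply: dmap_eq => i; rewrite dfn_dcomp.
Qed.

Definition R_act m n (f : emap m n) : hom (sX X n) (sX X m) := sact X (sval f).
Definition R_mu p q : hom (sX X (p + q)) (prodo P (sX X p) (sX X q)) :=
  pairm P (sact X (front p q)) (sact X (back p q)).

Lemma R_act_id n : R_act (eid n) = idm _.
Proof. exact: sact_id. Qed.
Lemma R_act_comp l m n (f : emap l m) (g : emap m n) :
  R_act (ecomp f g) = comp (R_act f) (R_act g).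
Proof. exact: sact_comp. Qed.

Lemma endpt0 m n (f : emap m n) : efn f ord0 = ord0.
Proof. by rewrite /efn; case: f => f /= /andP[/eqP H _]. Qed.
Lemma endptM m n (f : emap m n) : efn f ord_max = ord_max.
Proof. by rewrite /efn; case: f => f /= /andP[_ /eqP H]. Qed.

Lemma R_mu_nat p p' q q' (f : emap p p') (g : emap q q') (h : emap (p + q) (p' + q')) :
  is_tensor f g h ->
  comp (R_mu p q) (R_act h) = comp (fprodm P (R_act f) (R_act g)) (R_mu p' q').
Proof.
move=> Ht; rewrite /R_mu /R_act pair_comp fprod_pair.
congr (pairm P _ _); rewrite -!sact_comp; congr sact; apply: dmap_eq => i;
  rewrite !dfn_dcomp.
- have hi := ltn_ord i.
  rewrite dfn_front; move: (Ht (dfn (front p q) i)); rewrite /efn => ->.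
  by rewrite !dfn_front -ltnS hi inord_val.
- have hi := ltn_ord i.
  move: (Ht (dfn (back p q) i)); rewrite /efn => ->; rewrite dfn_back dfn_back.
  case: (posnP i) => [i0|ip].
  + rewrite i0 addn0 leqnn.
    have -> : (inord p : 'I_p.+1) = ord_max by apply: val_inj; rewrite /= inordK.
    have -> : i = ord0 by apply: val_inj.
    by move: (endptM f) (endpt0 g); rewrite /efn => -> -> /=; rewrite addn0.
  + have -> : (p + i <= p)%N = false by lia.
    congr (_ + _)%N; congr (nat_of_ord (dfn _ _)); apply: val_inj.
    by rewrite /= inordK; [lia | lia].
Qed.

Lemma passoc_pair c a b d (u : hom c a) (v : hom c b) (w : hom c d) :
  comp (passoc P a b d) (pairm P u (pairm P v w)) = pairm P (pairm P u v) w.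
Proof.
rewrite /passoc !pair_comp -!compA (ppr2_pair P u) !(ppr1_pair P) (ppr2_pair P v w). reflexivity.
Qed.

Lemma R_mu_coassoc p q r (h : emap (p + q + r) (p + (q + r))) :
  is_cast h ->
  comp (comp (fprodm P (R_mu p q) (idm (sX X r))) (R_mu (p + q) r)) (R_act h)
  = comp (passoc P (sX X p) (sX X q) (sX X r))
         (comp (fprodm P (idm (sX X p)) (R_mu q r)) (R_mu p (q + r))).
Proof.
move=> Hc; rewrite /R_mu /R_act !fprod_pair !comp1f.
rewrite [X in comp (passoc _ _ _ _) (pairm _ _ X)]pair_comp passoc_pair !pair_comp.
rewrite -!compA -!sact_comp.
congr (pairm P (pairm P _ _) _); congr sact; apply: dmap_eq => i;
  rewrite !dfn_dcomp; move: (Hc) => /(_ (dfn _ _)); rewrite /efn => ->;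
  rewrite ?dfn_front ?dfn_back ?dfn_front ?dfn_back //; lia.
Qed.

Lemma R_mu_counit_l p (h : emap (0 + p) p) :
  is_cast h ->
  comp (ppr2 P) (comp (fprodm P (bang P _) (idm (sX X p))) (comp (R_mu 0 p) (R_act h)))
  = idm (sX X p).
Proof.
move=> Hc; rewrite /R_mu /R_act pair_comp fprod_pair ppr2_pair comp1f -sact_comp -sact_id.
congr sact; apply: dmap_eq => i; rewrite dfn_dcomp.
by move: (Hc) => /(_ (dfn _ _)); rewrite /efn => ->; rewrite dfn_back /dfn /= ffunE.
Qed.

Lemma R_mu_counit_r p (h : emap (p + 0) p) :
  is_cast h ->
  comp (ppr1 P) (comp (fprodm P (idm (sX X p)) (bang P _)) (comp (R_mu p 0) (R_act h)))
  = idm (sX X p).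
Proof.
move=> Hc; rewrite /R_mu /R_act pair_comp fprod_pair ppr1_pair comp1f -sact_comp -sact_id.
congr sact; apply: dmap_eq => i; rewrite dfn_dcomp.
by move: (Hc) => /(_ (dfn _ _)); rewrite /efn => ->; rewrite dfn_front /dfn /= ffunE.
Qed.

Definition R_ob : oplax P :=
  @Oplax C P (sX X) R_act R_act_id R_act_comp R_mu (bang P _)
    R_mu_nat R_mu_coassoc R_mu_counit_l R_mu_counit_r.
End Restriction.

Section RFunctor.
Variables (C : Cat) (P : FinProducts C).

Section RMor.
Variables (X Y : sobj C) (a : smor X Y).
Lemma R_mor_nat m n (f : emap m n) :
  comp (scomp a m) (R_act X f) = comp (R_act Y f) (scomp a n).
Proof. exact: snat. Qed.
Lemma R_mor_mon p q :
  comp (R_mu P Y p q) (scomp a (p + q))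
  = comp (fprodm P (scomp a p) (scomp a q)) (R_mu P X p q).
Proof. by rewrite /R_mu pair_comp fprod_pair -!snat. Qed.
Lemma R_mor_eps : comp (bang P (sX Y 0)) (scomp a 0) = bang P (sX X 0).
Proof. exact: bang_uniq. Qed.
Definition R_mor : omor (R_ob P X) (R_ob P Y) :=
  @OMor C P (R_ob P X) (R_ob P Y) (scomp a) R_mor_nat R_mor_mon R_mor_eps.
End RMor.

Definition Rfun : Functor (SCat C) (OCat P).
Proof.
refine (@Functor_ (SCat C) (OCat P) (fun X => R_ob P X) (fun X Y a => R_mor a) _ _).
- by move=> X; apply: omor_eq.
- by move=> X Y Z b a; apply: omor_eq.
Defined.
End RFunctor.

(* Main.v *)
From Stdlib Require Import FunctionalExtensionality ProofIrrelevance.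
From HB Require Import structures.
From mathcomp Require Import all_boot zify.
Require Import Defs.
Set Implicit Arguments.
Unset Strict Implicit.
Unset Printing Implicit Defensive.

Definition ev m n (f : emap m n) (i : nat) : nat := efn f (inord i).

Lemma emap_eq m n (f g : emap m n) : (forall i, i <= m -> ev f i = ev g i) -> f = g.
Proof.
move=> H; apply: val_inj; apply: dmap_eq => i.
have := H i; rewrite /ev inord_val; apply; by rewrite -ltnS.
Qed.

Lemma ev0 m n (f : emap m n) : ev f 0 = 0.
Proof.
rewrite /ev; have -> : (inord 0 : 'I_m.+1) = ord0 by apply: val_inj; rewrite /= inordK.
by rewrite endpt0.
Qed.

Lemma evM m n (f : emap m n) : ev f m = n.
Proof.
rewrite /ev; have -> : (inord m : 'I_m.+1) = ord_max by apply: val_inj; rewrite /= inordK.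
by rewrite endptM.
Qed.

Lemma ev_le m n (f : emap m n) i : ev f i <= n.
Proof. by rewrite /ev -ltnS ltn_ord. Qed.

Lemma ev_mono m n (f : emap m n) i j : i <= j -> j <= m -> ev f i <= ev f j.
Proof.
move=> ij jm; rewrite /ev /efn; apply: dfn_mono; rewrite !inordK //; lia.
Qed.

Lemma ev_comp l m n (f : emap l m) (g : emap m n) i : i <= l ->
  ev (ecomp f g) i = ev g (ev f i).
Proof. by move=> _; rewrite /ev /efn /= dfn_dcomp inord_val. Qed.

Section MkE.
Variables (m n : nat) (phi : nat -> nat).
Hypotheses (H0 : phi 0 = 0) (Hm : phi m = n)
  (Hmono : forall i j, i <= j -> j <= m -> phi i <= phi j).
Lemma phi_le i : i <= m -> phi i <= n.
Proof. by move=> im; rewrite -Hm; apply: Hmono. Qed.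
Lemma mkE_mono : dmono [ffun i : 'I_m.+1 => (inord (phi i) : 'I_n.+1)].
Proof.
apply/forallP => i; apply/forallP => j; apply/implyP => ij; rewrite !ffunE.
have hi := ltn_ord i; have hj := ltn_ord j.
rewrite !inordK; try (rewrite ltnS; apply: phi_le; lia).
apply: Hmono => //; lia.
Qed.
Definition mkD : dmap m n := exist (@dmono m n) _ mkE_mono.
Lemma mkE_endpt : endpt mkD.
Proof.
rewrite /endpt /dfn /= !ffunE; apply/andP; split; apply/eqP; apply: val_inj;
  rewrite /= inordK ?H0 ?Hm //.
Qed.
Definition mkE : emap m n := exist (@endpt m n) _ mkE_endpt.
Lemma ev_mkE i : i <= m -> ev mkE i = phi i.
Proof.
move=> im; rewrite /ev /efn /dfn /= ffunE !inordK //; rewrite ltnS //; exact: phi_le.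
Qed.
End MkE.

Definition ecast m n (e : m = n) : emap m n :=
  @mkE m n id erefl e (fun i j ij _ => ij).
Lemma ev_ecast m n (e : m = n) i : i <= m -> ev (ecast e) i = i.
Proof. by move=> im; rewrite /ecast ev_mkE. Qed.

Lemma ev_eid n i : i <= n -> ev (eid n) i = i.
Proof. by move=> im; rewrite /ev /efn /dfn /= ffunE inordK. Qed.

Lemma emap_id m (f : emap m m) : (forall i, i <= m -> ev f i = i) -> f = eid m.
Proof. by move=> H; apply: emap_eq => i im; rewrite H // ev_eid. Qed.
Lemma efn_ev m n (f : emap m n) (i : 'I_m.+1) : (efn f i : nat) = ev f i.
Proof. by rewrite /ev inord_val. Qed.

Section Prod.
Variables (C : Cat) (P : FinProducts C).
Lemma ppr1_fprod (a b a' b' : C) (f : hom a a') (g : hom b b') :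
  comp (ppr1 P) (fprodm P f g) = comp f (ppr1 P).
Proof. by rewrite /fprodm ppr1_pair. Qed.
Lemma ppr2_fprod (a b a' b' : C) (f : hom a a') (g : hom b b') :
  comp (ppr2 P) (fprodm P f g) = comp g (ppr2 P).
Proof. by rewrite /fprodm ppr2_pair. Qed.
End Prod.

Section GF.
Variables (C : Cat) (P : FinProducts C) (F : oplax P).
Local Notation A := (oact F).
Local Notation mu := (omu F).

Lemma A_id m (f : emap m m) : (forall i, i <= m -> ev f i = i) -> A f = idm _.
Proof. by move=> H; rewrite (emap_id H) oact_id. Qed.

Fact Dk_key : unit. Proof. exact: tt. Qed.
Definition Dk : forall n k (Hk : k <= n), hom (oF F n) (prodo P (oF F k) (oF F (n - k))) :=
  locked_with Dk_key (fun n k (Hk : k <= n) => comp (mu k (n - k)) (A (ecast (subnKC Hk)))).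
Lemma DkE n k (Hk : k <= n) : Dk Hk = comp (mu k (n - k)) (A (ecast (subnKC Hk))).
Proof. by rewrite /Dk unlock. Qed.

Lemma split0 p q n (h : emap (p + q) n) k (Hk : k <= n) : ev h p = k ->
  exists (h1 : emap p k) (h2 : emap q (n - k)),
   [/\ forall i, i <= p -> ev h1 i = ev h i,
       forall i, i <= q -> ev h2 i = ev h (p + i) - k &
       comp (mu p q) (A h) = comp (fprodm P (A h1) (A h2)) (Dk Hk)].
Proof.
move=> hp.
have m1 : forall i j, i <= j -> j <= p -> ev h i <= ev h j.
  by move=> i j ij jp; apply: ev_mono => //; lia.
pose h1 := @mkE p k (ev h) (ev0 h) hp m1.
have H02 : ev h (p + 0) - k = 0 by rewrite addn0 hp subnn.
have Hm2 : ev h (p + q) - k = n - k by rewrite evM.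
have m2 : forall i j, i <= j -> j <= q -> ev h (p + i) - k <= ev h (p + j) - k.
  by move=> i j ij jq; apply: leq_sub2r; apply: ev_mono; lia.
pose h2 := @mkE q (n - k) (fun i => ev h (p + i) - k) H02 Hm2 m2.
have Hm' : ev h (p + q) = k + (n - k) by rewrite evM subnKC.
have m' : forall i j, i <= j -> j <= p + q -> ev h i <= ev h j.
  by move=> i j ij jp; apply: ev_mono.
pose h' := @mkE (p + q) (k + (n - k)) (ev h) (ev0 h) Hm' m'.
have Eh : h = ecomp h' (ecast (subnKC Hk)).
  apply: emap_eq => i ip; rewrite ev_comp // ev_ecast; last by apply: ev_le.
  by rewrite ev_mkE.
have Ht : is_tensor h1 h2 h'.
  move=> i; rewrite !efn_ev; have hi := ltn_ord i.
  rewrite ev_mkE; last by lia.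
  case: ifP => ip.
  - by rewrite /ev inordK ?ltnS // -/(ev h1 i) ev_mkE.
  - rewrite /ev inordK; last by lia.
    rewrite -/(ev h2 (i - p)) ev_mkE; last by lia.
    have -> : p + (i - p) = i by lia.
    have : ev h p <= ev h i by apply: ev_mono; lia.
    rewrite -/(ev h i); lia.
exists h1, h2; split.
- by move=> i ip; rewrite ev_mkE.
- by move=> i iq; rewrite ev_mkE.
- rewrite Eh oact_comp compA (omu_nat F Ht) DkE compA. by [].
Qed.
End GF.
Section GF2.
Variables (C : Cat) (P : FinProducts C) (F : oplax P).
Local Notation A := (oact F).
Local Notation mu := (omu F).

Lemma cx (a b b' c : C) (f : hom b c) (g : hom a b) (f' : hom b' c) (g' : hom a b') :
  comp f g = comp f' g' -> forall d (x : hom d a), comp f (comp g x) = comp f' (comp g' x).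
Proof. by move=> E d x; rewrite !compA E. Qed.

Fact Fr_key : unit. Proof. exact: tt. Qed.
Definition Fr : forall n k (Hk : k <= n), hom (oF F n) (oF F k) :=
  locked_with Fr_key (fun n k (Hk : k <= n) => comp (ppr1 P) (Dk F Hk)).
Lemma FrE n k (Hk : k <= n) : Fr Hk = comp (ppr1 P) (Dk F Hk).
Proof. by rewrite /Fr unlock. Qed.
Fact Bk_key : unit. Proof. exact: tt. Qed.
Definition Bk : forall n k (Hk : k <= n), hom (oF F n) (oF F (n - k)) :=
  locked_with Bk_key (fun n k (Hk : k <= n) => comp (ppr2 P) (Dk F Hk)).
Lemma BkE n k (Hk : k <= n) : Bk Hk = comp (ppr2 P) (Dk F Hk).
Proof. by rewrite /Bk unlock. Qed.

Lemma p1f (a b a' b' d : C) (f : hom a a') (g : hom b b') (x : hom d _) :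
  comp (ppr1 P) (comp (fprodm P f g) x) = comp f (comp (ppr1 P) x).
Proof. by rewrite compA ppr1_fprod -compA. Qed.
Lemma p2f (a b a' b' d : C) (f : hom a a') (g : hom b b') (x : hom d _) :
  comp (ppr2 P) (comp (fprodm P f g) x) = comp g (comp (ppr2 P) x).
Proof. by rewrite compA ppr2_fprod -compA. Qed.
Lemma p11a (a b c d : C) (x : hom d _) :
  comp (ppr1 P) (comp (ppr1 P) (comp (passoc P a b c) x)) = comp (ppr1 P) x.
Proof. by rewrite /passoc !pair_comp !ppr1_pair. Qed.
Lemma p21a (a b c d : C) (x : hom d _) :
  comp (ppr2 P) (comp (ppr1 P) (comp (passoc P a b c) x)) = comp (ppr1 P) (comp (ppr2 P) x).
Proof. by rewrite /passoc !pair_comp ppr1_pair ppr2_pair -compA. Qed.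
Lemma p2a (a b c d : C) (x : hom d _) :
  comp (ppr2 P) (comp (passoc P a b c) x) = comp (ppr2 P) (comp (ppr2 P) x).
Proof. by rewrite /passoc !pair_comp ppr2_pair -compA. Qed.

Lemma mu_cast p q n (h : emap (p + q) n) k (Hk : k <= n) :
  (forall i, i <= p + q -> ev h i = i) -> p = k ->
  exists (h1 : emap p k) (h2 : emap q (n - k)),
   [/\ (forall i, i <= p -> ev h1 i = i), (forall i, i <= q -> ev h2 i = i),
     forall d (x : hom d _), comp (ppr1 P) (comp (mu p q) (comp (A h) x)) = comp (A h1) (comp (Fr Hk) x) &
     forall d (x : hom d _), comp (ppr2 P) (comp (mu p q) (comp (A h) x)) = comp (A h2) (comp (Bk Hk) x)].
Proof.
move=> Hh pk.
have [h1 [h2 [E1 E2 E]]] := split0 F Hk (etrans (Hh p (leq_addr _ _)) pk).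
exists h1, h2; split.
- by move=> i ip; rewrite E1 ?Hh //; lia.
- by move=> i iq; rewrite E2 ?Hh //; lia.
- by move=> d x; rewrite (cx E) p1f FrE -compA.
- by move=> d x; rewrite (cx E) p2f BkE -compA.
Qed.

Lemma A_comp_id a b c (e1 : emap a b) (e2 : emap b c) (e3 : emap a c) :
  (forall i, i <= a -> ev e1 i = i) -> (forall i, i <= b -> ev e2 i = i) ->
  (forall i, i <= a -> ev e3 i = i) ->
  comp (A e1) (A e2) = A e3.
Proof.
move=> H1 H2 H3; rewrite -oact_comp; congr (A _); apply: emap_eq => i ia.
rewrite ev_comp // H1 // H2 ?H3 //; rewrite -(H1 i ia); exact: ev_le.
Qed.

Lemma ev_cc m n r (e : m = n) (e' : n = r) i : i <= m -> ev (ecomp (ecast e) (ecast e')) i = i.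
Proof. by move=> im; rewrite ev_comp // !ev_ecast //; lia. Qed.

Lemma C1 a b n (Hab : a <= b) (Hbn : b <= n) (Han : a <= n) :
  comp (Fr Hab) (Fr Hbn) = Fr Han.
Proof.
have e : a + (b - a) + (n - b) = a + ((b - a) + (n - b)) by rewrite addnA.
have Hc : is_cast (ecast e) by move=> i; rewrite efn_ev ev_ecast // -ltnS.
have E := omu_coassoc F Hc.
have e2 : a + ((b - a) + (n - b)) = n by lia.
have E' := congr1 (fun x => comp (ppr1 P) (comp (ppr1 P) (comp x (A (ecast e2))))) E.
simpl in E'; move: E'; rewrite -!compA p11a !p1f comp1f.
have [h1 [h2 [H1 H2 R1 R2]]] := @mu_cast a ((b - a) + (n - b)) n (ecast e2) a Han
  (fun i Hi => @ev_ecast _ _ e2 i Hi) erefl.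
move: (R1 _ (idm _)); rewrite !compf1 (A_id F H1) comp1f => ->.
rewrite -oact_comp.
have Hv := ev_cc e e2.
have [g1 [g2 [G1 G2 S1 S2]]] := @mu_cast (a + (b - a)) (n - b) n (ecomp (ecast e) (ecast e2)) b Hbn
  Hv (subnKC Hab).
move: (S1 _ (idm _)); rewrite !compf1 => ->.
have [k1 [k2 [K1 K2 T1 T2]]] := @mu_cast a (b - a) b g1 a Hab G1 erefl.
move: (T1 _ (Fr Hbn)); rewrite (A_id F K1) comp1f => ->.
by [].
Qed.

Lemma CX b c d (Hb : b <= d - c) (Hcd : c <= d) (Hc : c <= c + b) (Hcb : c + b <= d)
  (e : emap b (c + b - c)) : (forall i, i <= b -> ev e i = i) ->
  comp (Fr Hb) (Bk Hcd) = comp (A e) (comp (Bk Hc) (Fr Hcb)).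
Proof.
move=> He.
have e1 : c + b + (d - c - b) = c + (b + (d - c - b)) by rewrite addnA.
have Hc1 : is_cast (ecast e1) by move=> i; rewrite efn_ev ev_ecast // -ltnS.
have E := omu_coassoc F Hc1.
have e2 : c + (b + (d - c - b)) = d by lia.
have E' := congr1 (fun x => comp (ppr2 P) (comp (ppr1 P) (comp x (A (ecast e2))))) E.
simpl in E'; move: E'; rewrite -!compA p21a p2f p1f.
have [h1 [h2 [H1 H2 R1 R2]]] := @mu_cast c (b + (d - c - b)) d (ecast e2) c Hcd
  (fun i Hi => @ev_ecast _ _ e2 i Hi) erefl.
move: (R2 _ (idm _)); rewrite !compf1 => ->.
have [k1 [k2 [K1 K2 T1 T2]]] := @mu_cast b (d - c - b) (d - c) h2 b Hb H2 erefl.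
move: (T1 _ (Bk Hcd)); rewrite (A_id F K1) comp1f => -> <-.
rewrite -oact_comp.
have Hv := ev_cc e1 e2.
have [g1 [g2 [G1 G2 S1 S2]]] := @mu_cast (c + b) (d - c - b) d (ecomp (ecast e1) (ecast e2)) (c + b) Hcb
  Hv erefl.
move: (S1 _ (idm _)); rewrite !compf1 => ->.
have [l1 [l2 [L1 L2 U1 U2]]] := @mu_cast c b (c + b) g1 c Hc G1 erefl.
rewrite U2; congr (comp (A _) _); apply: emap_eq => i ib; by rewrite He ?L2.
Qed.

Lemma CY a c n (Hc : c <= n) (Ha : a <= n - c) (Hca : c + a <= n)
  (e : emap (n - c - a) (n - (c + a))) : (forall i, i <= n - c - a -> ev e i = i) ->
  comp (Bk Ha) (Bk Hc) = comp (A e) (Bk Hca).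
Proof.
move=> He.
have e1 : c + a + (n - c - a) = c + (a + (n - c - a)) by rewrite addnA.
have Hc1 : is_cast (ecast e1) by move=> i; rewrite efn_ev ev_ecast // -ltnS.
have E := omu_coassoc F Hc1.
have e2 : c + (a + (n - c - a)) = n by lia.
have E' := congr1 (fun x => comp (ppr2 P) (comp x (A (ecast e2)))) E.
simpl in E'; move: E'; rewrite -!compA p2a !p2f comp1f.
have [h1 [h2 [H1 H2 R1 R2]]] := @mu_cast c (a + (n - c - a)) n (ecast e2) c Hc
  (fun i Hi => @ev_ecast _ _ e2 i Hi) erefl.
move: (R2 _ (idm _)); rewrite !compf1 => ->.
have [k1 [k2 [K1 K2 T1 T2]]] := @mu_cast a (n - c - a) (n - c) h2 a Ha H2 erefl.
move: (T2 _ (Bk Hc)); rewrite (A_id F K2) comp1f => -> <-.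
rewrite -oact_comp.
have Hv := ev_cc e1 e2.
have [g1 [g2 [G1 G2 S1 S2]]] := @mu_cast (c + a) (n - c - a) n (ecomp (ecast e1) (ecast e2)) (c + a) Hca
  Hv erefl.
move: (S2 _ (idm _)); rewrite !compf1 => ->.
congr (comp (A _) _); apply: emap_eq => i ib; by rewrite He ?G2.
Qed.
End GF2.
Section GF3.
Variables (C : Cat) (P : FinProducts C) (F : oplax P).
Local Notation A := (oact F).
Local Notation mu := (omu F).
Local Notation Fr := (Fr F).
Local Notation Bk := (Bk F).

Lemma splitD m n (h : emap m n) k (Hk : k <= m) k' (Hk' : k' <= n) : ev h k = k' ->
  exists (h1 : emap k k') (h2 : emap (m - k) (n - k')),
   [/\ forall i, i <= k -> ev h1 i = ev h i,
       forall i, i <= m - k -> ev h2 i = ev h (k + i) - k',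
       forall d (x : hom d _), comp (Fr Hk) (comp (A h) x) = comp (A h1) (comp (Fr Hk') x) &
       forall d (x : hom d _), comp (Bk Hk) (comp (A h) x) = comp (A h2) (comp (Bk Hk') x)].
Proof.
move=> hk.
have hk2 : ev (ecomp (ecast (subnKC Hk)) h) k = k'.
  by rewrite ev_comp ?ev_ecast // leq_addr.
have [h1 [h2 [H1 H2 E]]] := split0 F Hk' hk2.
exists h1, h2; split.
- by move=> i ik; rewrite H1 // ev_comp ?ev_ecast //; lia.
- by move=> i ik; rewrite H2 // ev_comp ?ev_ecast //; lia.
- move=> d x; rewrite FrE DkE -!compA (compA (A _)) -oact_comp (cx E) p1f.
  by rewrite FrE -compA.
- move=> d x; rewrite BkE DkE -!compA (compA (A _)) -oact_comp (cx E) p2f.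
  by rewrite BkE -compA.
Qed.

Definition iota n a b (Hab : a <= b) (Hbn : b <= n) : hom (oF F n) (oF F (b - a)) :=
  comp (Bk Hab) (Fr Hbn).

Lemma iota_comm m n (h : emap m n) a b (Hab : a <= b) (Hbm : b <= m)
  (Hab' : ev h a <= ev h b) (Hbn' : ev h b <= n) :
  exists h2 : emap (b - a) (ev h b - ev h a),
    (forall i, i <= b - a -> ev h2 i = ev h (a + i) - ev h a) /\
    comp (iota Hab Hbm) (A h) = comp (A h2) (iota Hab' Hbn').
Proof.
have [h1 [_ [H1 _ R1 _]]] := splitD Hbm Hbn' erefl.
have ha : ev h1 a = ev h a by rewrite H1.
have [_ [k2 [_ K2 _ T2]]] := splitD Hab Hab' ha.
exists k2; split.
- by move=> i iba; rewrite K2 // H1 //; lia.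
- move: (R1 _ (idm _)) (T2 _ (idm _)); rewrite !compf1 => R1' T2'.
  by rewrite /iota -compA R1' compA T2' compA.
Qed.

Lemma iota_eq n a b a' b' (Hab : a <= b) (Hbn : b <= n) (Hab' : a' <= b') (Hbn' : b' <= n)
  (e : emap (b - a) (b' - a')) : a = a' -> b = b' -> (forall i, i <= b - a -> ev e i = i) ->
  iota Hab Hbn = comp (A e) (iota Hab' Hbn').
Proof.
move=> ea eb He; subst a' b'.
rewrite (A_id F He) comp1f.
by rewrite (bool_irrelevance Hab Hab') (bool_irrelevance Hbn Hbn').
Qed.

Lemma iota_iota n a b c d (Hab : a <= b) (Hb : b <= d - c) (Hcd : c <= d) (Hdn : d <= n)
  (H1 : c + a <= c + b) (H2 : c + b <= n) (e : emap (b - a) (c + b - (c + a))) :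
  (forall i, i <= b - a -> ev e i = i) ->
  comp (iota Hab Hb) (iota Hcd Hdn) = comp (A e) (iota H1 H2).
Proof.
move=> He.
have eb : b = c + b - c by lia.
have Hc : c <= c + b by apply: leq_addr.
have Hcb : c + b <= d by lia.
rewrite /iota -compA (compA (Fr Hb)) (@CX _ _ F b c d Hb Hcd Hc Hcb (ecast eb) (fun i Hi => ev_ecast _ Hi)).
rewrite -!compA (C1 F Hcb Hdn H2).
have Ha : a <= c + b - c by lia.
have [_ [h2 [_ K2 _ T2]]] := splitD Hab Ha (ev_ecast eb Hab).
move: (T2 _ (idm _)); rewrite !compf1 => T2'.
rewrite (compA (Bk Hab)) T2'.
have Ha2 : a <= c + b - c by lia.
rewrite -!compA (compA (Bk Ha)).
have e3 : c + b - c - a = c + b - (c + a) by lia.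
rewrite (@CY _ _ F a c (c + b) Hc Ha H1 (ecast e3) (fun i Hi => ev_ecast _ Hi)).
rewrite -!compA (compA (A h2)); congr (comp _ _); apply: A_comp_id => // i Hi.
  rewrite K2 ?ev_ecast //; lia.
by rewrite ev_ecast.
Qed.

Lemma Fr_nn n (Hnn : n <= n) : Fr Hnn = idm _.
Proof.
have Hc : is_cast (ecast (addn0 n)) by move=> i; rewrite efn_ev ev_ecast // -ltnS.
have E := omu_counit_r F Hc.
move: E; rewrite p1f comp1f.
have [h1 [h2 [H1 H2 R1 R2]]] := @mu_cast _ _ F n 0 n (ecast (addn0 n)) n Hnn
  (fun i Hi => @ev_ecast _ _ _ i Hi) erefl.
by move: (R1 _ (idm _)); rewrite !compf1 (A_id F H1) comp1f => ->.
Qed.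

Lemma Bk_0n n (H0 : 0 <= n) (k : emap (n - 0) n) : (forall i, i <= n - 0 -> ev k i = i) ->
  Bk H0 = A k.
Proof.
move=> Hk.
have Hc : is_cast (ecast (add0n n)) by move=> i; rewrite efn_ev ev_ecast // -ltnS.
have E := omu_counit_l F Hc.
move: E; rewrite p2f comp1f.
have [h1 [h2 [H1 H2 R1 R2]]] := @mu_cast _ _ F 0 n n (ecast (add0n n)) 0 H0
  (fun i Hi => @ev_ecast _ _ _ i Hi) erefl.
move: (R2 _ (idm _)); rewrite !compf1 => -> E.
rewrite -[Bk H0]comp1f.
have -> : idm (oF F (n - 0)) = A (ecomp k h2).
  by rewrite A_id // => i Hi; rewrite ev_comp // H2 Hk //; lia.
by rewrite oact_comp -compA E compf1.
Qed.
End GF3.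
Definition dv m n (f : dmap m n) (i : nat) : nat := dfn f (inord i).
Lemma dv_mono m n (f : dmap m n) i j : i <= j -> j <= m -> dv f i <= dv f j.
Proof. move=> ij jm; apply: dfn_mono; rewrite !inordK //; lia. Qed.
Lemma dv_le m n (f : dmap m n) i : dv f i <= n.
Proof. by rewrite /dv -ltnS ltn_ord. Qed.
Lemma dv_comp l m n (f : dmap l m) (g : dmap m n) i : dv (dcomp f g) i = dv g (dv f i).
Proof. by rewrite /dv dfn_dcomp inord_val. Qed.

Section GObj.
Variables (C : Cat) (P : FinProducts C) (F : oplax P).
Local Notation A := (oact F).

Section GM.
Variables (m n : nat) (f : dmap m n).
Definition da := dv f 0.
Definition db := dv f m.
Lemma dab : da <= db. Proof. exact: dv_mono. Qed.
Lemma dbn : db <= n. Proof. exact: dv_le. Qed.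
Lemma gm0 : dv f 0 - da = 0. Proof. by rewrite subnn. Qed.
Lemma gmM : dv f m - da = db - da. Proof. by []. Qed.
Lemma gmmono i j : i <= j -> j <= m -> dv f i - da <= dv f j - da.
Proof. by move=> ij jm; apply: leq_sub2r; apply: dv_mono. Qed.
Definition gmap : emap m (db - da) := mkE gm0 gmM gmmono.
Lemma ev_gmap i : i <= m -> ev gmap i = dv f i - da.
Proof. by move=> im; rewrite /gmap ev_mkE. Qed.
Definition Gact : hom (oF F n) (oF F m) := comp (A gmap) (iota F dab dbn).
End GM.

Lemma Gact_id n : Gact (did n) = idm _.
Proof.
have dvid : forall i, i <= n -> dv (did n) i = i.
  by move=> i Hi; rewrite /dv /dfn /= ffunE inordK.
have H0 : 0 <= n by [].
have Hnn : n <= n by [].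
have hda : da (did n) = 0 by rewrite /da dvid.
have hdb : db (did n) = n by rewrite /db dvid.
have e1 : db (did n) - da (did n) = n - 0 by rewrite hda hdb.
rewrite /Gact (@iota_eq _ _ F n _ _ 0 n (dab (did n)) (dbn (did n)) H0 Hnn (ecast e1)) //;
  last by move=> i Hi; rewrite ev_ecast.
rewrite /iota Fr_nn compf1 (@Bk_0n _ _ F n H0 (ecast (subn0 n))); last by move=> i Hi; rewrite ev_ecast.
rewrite -!oact_comp A_id // => i Hi.
rewrite !ev_comp ?ev_ecast ?ev_gmap //.
all: rewrite ?hda ?hdb ?dvid ?subn0 //; lia.
Qed.

Lemma Gact_comp l m n (f : dmap l m) (g : dmap m n) :
  Gact (dcomp f g) = comp (Gact f) (Gact g).
Proof.
set a := da f; set b := db f; set c := da g; set d := db g.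
pose ab : a <= b := dab f.
pose bm : b <= m := dbn f.
pose cd : c <= d := dab g.
have ca : c <= dv g a by rewrite /c /da; apply: dv_mono => //; lia.
have evg : forall x, x <= m -> ev (gmap g) x = dv g x - c by move=> x Hx; rewrite ev_gmap.
have Hab' : ev (gmap g) a <= ev (gmap g) b by apply: ev_mono.
have Hbn' : ev (gmap g) b <= d - c by apply: ev_le.
have [h2 [H2 E2]] := @iota_comm _ _ F _ _ (gmap g) a b ab bm Hab' Hbn'.
have H1 : c + ev (gmap g) a <= c + ev (gmap g) b by rewrite leq_add2l.
have H2' : c + ev (gmap g) b <= n.
  rewrite evg // subnKC; [exact: dv_le | exact: dv_mono].
have e1 : ev (gmap g) b - ev (gmap g) a = c + ev (gmap g) b - (c + ev (gmap g) a) by lia.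
have E3 := @iota_iota _ _ F n _ _ c d Hab' Hbn' cd (dbn g) H1 H2' (ecast e1)
  (fun i Hi => ev_ecast _ Hi).
have hda : c + ev (gmap g) a = da (dcomp f g).
  rewrite /da (dv_comp f g 0) evg; [exact: subnKC ca | lia].
have hdb : c + ev (gmap g) b = db (dcomp f g).
  have cb : c <= dv g b by apply: (leq_trans ca); exact: dv_mono.
  rewrite /db (dv_comp f g l) evg; [exact: subnKC cb | lia].
have e2 : c + ev (gmap g) b - (c + ev (gmap g) a) = db (dcomp f g) - da (dcomp f g)
  by rewrite hda hdb.
have E4 := @iota_eq _ _ F n _ _ _ _ H1 H2' (dab (dcomp f g)) (dbn (dcomp f g)) (ecast e2)
  hda hdb (fun i Hi => ev_ecast _ Hi).
rewrite /Gact -compA (compA (iota _ _ _)) E2 -compA E3 E4.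
rewrite !compA -!oact_comp; congr (comp (comp (A _) _) _).
apply: emap_eq => i il.
have fa : a <= dv f i by apply: dv_mono.
have fb : dv f i <= b by apply: dv_mono.
have fm : dv f i <= m by lia.
rewrite !ev_comp //.
have B1 := ev_le h2 (ev (gmap f) i).
rewrite (ev_ecast e2); last by rewrite (ev_ecast e1 B1); lia.
rewrite (ev_ecast e1 B1).
rewrite H2; last by apply: ev_le.
rewrite (ev_gmap f) // -/a (ev_gmap (dcomp f g)) //.
have -> : da (dcomp f g) = dv g a by rewrite /da (dv_comp f g 0).
rewrite (dv_comp f g i).
have -> : a + (dv f i - a) = dv f i by lia.
rewrite !evg //.
have : dv g a <= dv g (dv f i) by apply: dv_mono.
all: lia.
Qed.

Definition Gob : sobj C := SObj Gact_id Gact_comp.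
End GObj.
Section GMor.
Variables (C : Cat) (P : FinProducts C) (F1 F2 : oplax P) (a : omor F1 F2).

Lemma Dk_nat n k (Hk : k <= n) :
  comp (Dk F2 Hk) (ocomp a n) = comp (fprodm P (ocomp a k) (ocomp a (n - k))) (Dk F1 Hk).
Proof. by rewrite !DkE -compA -onat compA omon -compA. Qed.

Lemma Fr_nat n k (Hk : k <= n) :
  comp (Fr F2 Hk) (ocomp a n) = comp (ocomp a k) (Fr F1 Hk).
Proof. by rewrite !FrE -compA Dk_nat compA ppr1_fprod -compA. Qed.
Lemma Bk_nat n k (Hk : k <= n) :
  comp (Bk F2 Hk) (ocomp a n) = comp (ocomp a (n - k)) (Bk F1 Hk).
Proof. by rewrite !BkE -compA Dk_nat compA ppr2_fprod -compA. Qed.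
Lemma iota_nat n x y (Hxy : x <= y) (Hyn : y <= n) :
  comp (iota F2 Hxy Hyn) (ocomp a n) = comp (ocomp a (y - x)) (iota F1 Hxy Hyn).
Proof. by rewrite /iota -compA Fr_nat compA Bk_nat -compA. Qed.

Lemma Gmor_nat m n (f : dmap m n) :
  comp (ocomp a m) (sact (Gob F1) f) = comp (sact (Gob F2) f) (ocomp a n).
Proof. by rewrite /= /Gact compA onat -compA -iota_nat compA. Qed.
Definition Gmor : smor (Gob F1) (Gob F2) := @SMor C (Gob F1) (Gob F2) (ocomp a) Gmor_nat.
End GMor.

Definition Gfun (C : Cat) (P : FinProducts C) : Functor (OCat P) (SCat C).
Proof.
refine (@Functor_ (OCat P) (SCat C) (fun F => Gob F) (fun F G a => Gmor a) _ _).
- by move=> F; apply: smor_eq.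
- by move=> F G H b a; apply: smor_eq.
Defined.
Lemma dfn_ecast m n (e : m = n) (i : 'I_m.+1) : (dfn (sval (ecast e)) i : nat) = i.
Proof. by have := efn_ev (ecast e) i; rewrite /efn => ->; rewrite ev_ecast // -ltnS. Qed.

Section Equiv.
Variables (C : Cat) (P : FinProducts C).
Lemma p1p (a b c d : C) (f : hom c a) (g : hom c b) (x : hom d c) :
  comp (ppr1 P) (comp (pairm P f g) x) = comp f x.
Proof. by rewrite compA ppr1_pair. Qed.
Lemma p2p (a b c d : C) (f : hom c a) (g : hom c b) (x : hom d c) :
  comp (ppr2 P) (comp (pairm P f g) x) = comp g x.
Proof. by rewrite compA ppr2_pair. Qed.

Lemma GR (X : sobj C) m n (f : dmap m n) : sact (Gob (R_ob P X)) f = sact X f.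
Proof.
rewrite /= /Gact /iota FrE BkE !DkE /=.
unfold R_mu, R_act; rewrite -!compA !p1p !p2p.
rewrite -!sact_comp; congr (sact X _); apply: dmap_eq => i.
rewrite !dfn_dcomp dfn_ecast dfn_front dfn_ecast dfn_back.
have := efn_ev (gmap f) i; rewrite /efn => ->.
have im : i <= m by rewrite -ltnS.
rewrite ev_gmap //.
have : da f <= dv f i by apply: dv_mono.
rewrite /dv inord_val; lia.
Qed.
End Equiv.

Section RG.
Variables (C : Cat) (P : FinProducts C) (F : oplax P).
Local Notation A := (oact F).

Lemma RG_act m n (f : emap m n) : Gact F (sval f) = A f.
Proof.
have hda : da (sval f) = 0 by rewrite /da; exact: ev0 f.
have hdb : db (sval f) = n by rewrite /db; exact: evM f.
have H0 : 0 <= n by [].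
have Hnn : n <= n by [].
have e1 : db (sval f) - da (sval f) = n - 0 by rewrite hda hdb.
rewrite /Gact (@iota_eq _ _ F n _ _ 0 n (dab (sval f)) (dbn (sval f)) H0 Hnn (ecast e1)) //;
  last by move=> i Hi; rewrite ev_ecast.
rewrite /iota Fr_nn compf1 (@Bk_0n _ _ F n H0 (ecast (subn0 n))); last by move=> i Hi; rewrite ev_ecast.
rewrite -!oact_comp; congr (A _); apply: emap_eq => i Hi.
rewrite !ev_comp ?ev_ecast ?ev_gmap //.
all: rewrite ?hda ?hdb ?subn0 //; try lia.
all: by apply: dv_le.
Qed.

Lemma dv_front p q i : i <= p -> dv (front p q) i = i.
Proof. by move=> ip; rewrite /dv dfn_front inordK. Qed.
Lemma dv_back p q i : i <= q -> dv (back p q) i = p + i.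
Proof. by move=> ip; rewrite /dv dfn_back inordK. Qed.

Lemma RG_mu p q : R_mu P (Gob F) p q = omu F p q.
Proof.
have Hid : forall i, i <= p + q -> ev (eid (p + q)) i = i by move=> i Hi; rewrite ev_eid.
have Hp : p <= p + q by apply: leq_addr.
have [h1 [h2 [H1 H2 R1 R2]]] := @mu_cast _ _ F p q (p + q) (eid (p + q)) p Hp Hid erefl.
move: (R1 _ (idm _)) (R2 _ (idm _)); rewrite oact_id !compf1 => {}R1 {}R2.
rewrite [RHS]pair_uniq R1 R2; unfold R_mu; congr (pairm P _ _).
- rewrite /= /Gact.
  have hda : da (front p q) = 0 by rewrite /da dv_front.
  have hdb : db (front p q) = p by rewrite /db dv_front.
  have H0 : 0 <= p by [].
  have e1 : db (front p q) - da (front p q) = p - 0 by rewrite hda hdb.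
  rewrite (@iota_eq _ _ F (p + q) _ _ 0 p (dab _) (dbn _) H0 Hp (ecast e1)) //;
    last by move=> i Hi; rewrite ev_ecast.
  rewrite /iota (@Bk_0n _ _ F p H0 (ecast (subn0 p))); last by move=> i Hi; rewrite ev_ecast.
  rewrite !compA -!oact_comp; congr (comp (A _) _); apply: emap_eq => i Hi.
  rewrite H1 // !ev_comp ?ev_ecast ?ev_gmap //.
  all: rewrite ?hda ?hdb ?dv_front ?subn0 //; try lia.
- rewrite /= /Gact.
  have hda : da (back p q) = p by rewrite /da dv_back // addn0.
  have hdb : db (back p q) = p + q by rewrite /db dv_back.
  have Hpq : p + q <= p + q by [].
  have e1 : db (back p q) - da (back p q) = p + q - p by rewrite hda hdb.
  rewrite (@iota_eq _ _ F (p + q) _ _ p (p + q) (dab _) (dbn _) Hp Hpq (ecast e1)) //;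
    last by move=> i Hi; rewrite ev_ecast.
  rewrite /iota Fr_nn compf1.
  rewrite !compA -!oact_comp; congr (comp (A _) _); apply: emap_eq => i Hi.
  rewrite H2 // !ev_comp ?ev_ecast ?ev_gmap //.
  all: rewrite ?hda ?hdb ?dv_back ?subn0 //; try lia.
Qed.
End RG.

Theorem proposition3p8 (C : Cat) (P : FinProducts C) :
  is_equivalence (Rfun P).
Proof.
have etan : forall (X : sobj C) m n (f : dmap m n),
    comp (idm (sX X m)) (sact X f) = comp (sact (Gob (R_ob P X)) f) (idm (sX X n)).
  by move=> X m n f; rewrite GR comp1f compf1.
have etan' : forall (X : sobj C) m n (f : dmap m n),
    comp (idm (sX X m)) (sact (Gob (R_ob P X)) f) = comp (sact X f) (idm (sX X n)).
  by move=> X m n f; rewrite GR comp1f compf1.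
have epsn : forall (F : oplax P) m n (f : emap m n),
    comp (idm (oF F m)) (oact (R_ob P (Gob F)) f) = comp (oact F f) (idm (oF F n)).
  by move=> F m n f; rewrite /= /R_act RG_act comp1f compf1.
have epsn' : forall (F : oplax P) m n (f : emap m n),
    comp (idm (oF F m)) (oact F f) = comp (oact (R_ob P (Gob F)) f) (idm (oF F n)).
  by move=> F m n f; rewrite /= /R_act RG_act comp1f compf1.
have epsm : forall (F : oplax P) p q,
    comp (omu F p q) (idm _) = comp (fprodm P (idm (oF F p)) (idm (oF F q))) (omu (R_ob P (Gob F)) p q).
  by move=> F p q; rewrite /= RG_mu fprod_id comp1f compf1.
have epsm' : forall (F : oplax P) p q,
    comp (omu (R_ob P (Gob F)) p q) (idm _) = comp (fprodm P (idm (oF F p)) (idm (oF F q))) (omu F p q).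
  by move=> F p q; rewrite /= RG_mu fprod_id comp1f compf1.
have epse : forall (F : oplax P), comp (oeps F) (idm _) = oeps (R_ob P (Gob F)).
  by move=> F; apply: bang_uniq.
have epse' : forall (F : oplax P), comp (oeps (R_ob P (Gob F))) (idm _) = oeps F.
  by move=> F; rewrite compf1 /= [RHS]bang_uniq.
exists (Gfun P).
exists (fun X => @SMor C X (Gob (R_ob P X)) (fun n => idm _) (etan X)).
exists (fun X => @SMor C (Gob (R_ob P X)) X (fun n => idm _) (etan' X)).
exists (fun F => @OMor C P (R_ob P (Gob F)) F (fun n => idm _) (epsn F) (epsm F) (epse F)).
exists (fun F => @OMor C P F (R_ob P (Gob F)) (fun n => idm _) (epsn' F) (epsm' F) (epse' F)).
split.
- by move=> a a' f; apply: smor_eq => n /=; rewrite comp1f compf1.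
- by move=> b b' g; apply: omor_eq => n /=; rewrite comp1f compf1.
- by move=> a; split; apply: smor_eq => n /=; rewrite comp1f.
- by move=> b; split; apply: omor_eq => n /=; rewrite comp1f.
Qed.
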